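(* Let $P,\widehat P$ be transition kernels on finite $\mathcal S\times\mathcal A$, $r:\mathcal S\times\mathcal A\to[0,1]$, $n$ a positive integer, and $\pi$ a policy whose gain $\rho^\pi$ (under $P$) is a constant vector. Let $\overline h=h^\pi-(\min_sh^\pi(s))\mathbf 1$ and $\ell=\lceil\log_2\log_2(\|\overline h\|_\infty+4)\rceil$. Suppose that for some $\alpha>0$ the elementwise inequalities $$\big|(\widehat P_\pi-P_\pi)\overline h^{\circ2^k}\big|\le\sqrt{\frac{\alpha\,\mathbb V_{P_\pi}[\overline h^{\circ2^k}]}{n}}+\frac{\alpha\,2^k}{n}\big(\|\overline h\|_\infty+1\big)^{2^k}\mathbf 1$$ hold for all $k=0,\dots,\ell$. Then $$\|\widehat\rho^\pi-\rho^\pi\|_\infty\le2(\ell+1)\sqrt{\frac{\alpha(\|\overline h\|_\infty+1)}{n}}+(\ell+1)\frac{2\alpha}{n}\big(\|\overline h\|_\infty+1\big).$$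
   Context: $P_\pi(s,s')=\sum_a\pi(a|s)P(s'|s,a)$, $r_\pi(s)=\sum_a\pi(a|s)r(s,a)$. $P^\infty_\pi$ is the Cesàro limit of $P_\pi^t$; gain $\rho^\pi=P^\infty_\pi r_\pi$, bias $h^\pi=\mathrm{C\text{-}lim}_T\sum_{t<T}(P_\pi^tr_\pi-\rho^\pi)$ (Cesàro limit); $\widehat\rho^\pi=\widehat P^\infty_\pi r_\pi$ is the gain under $\widehat P$. $x^{\circ m}$ is the elementwise $m$-th power; $|\cdot|,\sqrt\cdot$ elementwise. $\mathbb V_{P_\pi}[x](s)=\sum_{s'}P_\pi(s,s')\big(x(s')-\sum_{s''}P_\pi(s,s'')x(s'')\big)^2$. *)

(* Defs.v *)
From HB Require Import structures.
From mathcomp Require Import all_boot all_order all_algebra.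
From mathcomp Require Import all_classical all_reals all_analysis.
Set Implicit Arguments. Unset Strict Implicit. Unset Printing Implicit Defensive.
Import Order.TTheory GRing.Theory Num.Theory.
Import numFieldNormedType.Exports.
Local Open Scope ring_scope.

Section MDP.
Variables (R : realType) (S A : finType).

(* a transition kernel P(s'|s,a) = P s a s' *)
Definition is_kernel (P : S -> A -> S -> R) : Prop :=
  (forall s a s', 0 <= P s a s') /\ (forall s a, \sum_(s' : S) P s a s' = 1).

(* a (stochastic, stationary) policy pi(a|s) = pi s a *)
Definition is_policy (pi : S -> A -> R) : Prop :=
  (forall s a, 0 <= pi s a) /\ (forall s, \sum_(a : A) pi s a = 1).

Definition Ppi (P : S -> A -> S -> R) (pi : S -> A -> R) : S -> S -> R :=
  fun s s' => \sum_(a : A) pi s a * P s a s'.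

Definition rpi (pi : S -> A -> R) (r : S -> A -> R) : S -> R :=
  fun s => \sum_(a : A) pi s a * r s a.

Definition mapply (M : S -> S -> R) (x : S -> R) : S -> R :=
  fun s => \sum_(s' : S) M s s' * x s'.

Fixpoint mpow (M : S -> S -> R) (t : nat) : S -> S -> R :=
  match t with
  | 0 => fun s s' => (s == s')%:R
  | t'.+1 => fun s s' => \sum_(u : S) mpow M t' s u * M u s'
  end.

Definition cesaro (u : nat -> R) : nat -> R :=
  fun T => (T%:R)^-1 * \sum_(t < T) u t.

Definition clim (u : nat -> R) : R := limn (cesaro u).

Definition Pinf (M : S -> S -> R) : S -> S -> R :=
  fun s s' => clim (fun t => mpow M t s s').

Definition gain P pi r : S -> R := mapply (Pinf (Ppi P pi)) (rpi pi r).

Definition bias P pi r : S -> R :=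
  fun s => clim (fun T => \sum_(t < T)
              (mapply (mpow (Ppi P pi) t) (rpi pi r) s - gain P pi r s)).

Definition supn (x : S -> R) : R := \big[Num.max/0]_(s : S) `|x s|.

(* minimum over S (the initial value supn x is >= every x s,
   so this is exactly min_s x s when S is nonempty) *)
Definition minS (x : S -> R) : R := \big[Num.min/supn x]_(s : S) x s.

Definition epow (x : S -> R) (m : nat) : S -> R := fun s => x s ^+ m.

Definition Var (M : S -> S -> R) (x : S -> R) : S -> R :=
  fun s => \sum_(s' : S) M s s' * (x s' - \sum_(s'' : S) M s s'' * x s'') ^+ 2.

End MDP.

Definition log2 {R : realType} (x : R) : R := ln x / ln 2.

(* Main.v *)
Require Import Defs.
From HB Require Import structures.
From mathcomp Require Import all_boot all_order all_algebra.
From mathcomp Require Import all_classical all_reals all_analysis.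
Import Order.TTheory GRing.Theory Num.Theory.
Local Open Scope ring_scope.
From mathcomp Require Import ring lra zify.
From Stdlib Require Import Lia.

Section ScWrap.
Import numFieldNormedType.Exports.

Section Scalar.
Variable R : realType.

Lemma sqrt_le_of (X Y : R) : 0 <= Y -> X <= Y ^+ 2 -> Num.sqrt X <= Y.
Proof.
move=> Y0 H; rewrite -(ger0_norm Y0) -sqrtr_sqr ler_sqrt //; exact: sqr_ge0.
Qed.

Lemma eqleR (x y : R) : x = y -> x <= y. Proof. by move=> ->. Qed.

Variables H u s : R.
Hypothesis H0 : 0 <= H.
Hypothesis u0 : 0 <= u.
Hypothesis s0 : 0 <= s.
Hypothesis ss : s ^+ 2 = u * (H + 1).

Lemma step (D1 Dk tau : R) (p : nat) :
  let B := H + 1 in let b := u * B in let G := 4 * (s + s ^+ 2) in 0 <= tau ->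
  D1 <= B ^+ (p.+1 + p) * ((p.+1 + p.+1)%:R * G + tau) ->
  Dk <= Num.sqrt (u * (D1 + (p.+1 + p.+1)%:R * H ^+ (p.+1 + p))) + u * p.+1%:R * B ^+ p.+1 ->
  Dk <= B ^+ p * (p.+1%:R * G + Num.sqrt (b * tau)).
Proof.
move=> B b G tau0 HD1 HDk.
have B1 : 1 <= B by rewrite /B lerDr.
have b0 : 0 <= b by rewrite /b /B -ss sqr_ge0.
have sb : s ^+ 2 = b by rewrite /b /B ss.
set m : R := p.+1%:R.
set t := Num.sqrt (b * tau).
have m1 : 1 <= m by rewrite /m ler1n.
have t0 : 0 <= t by exact: sqrtr_ge0.
have tt : t ^+ 2 = b * tau by rewrite sqr_sqrtr // mulr_ge0 // b0.
have Bp0 : 0 <= B ^+ p by rewrite exprn_ge0 // (le_trans _ B1).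
have E : B ^+ (p.+1 + p) = B ^+ p ^+ 2 * B by rewrite addSn exprS mulrC exprD -expr2.
have HB : H ^+ (p.+1 + p) <= B ^+ (p.+1 + p).
  have HB1 : H <= B by rewrite /B lerDl ler01.
  by rewrite lerXn2r // nnegrE // (le_trans _ B1) // (le_trans H0 HB1).
have m2 : (p.+1 + p.+1)%:R = 2 * m by rewrite natrD /m; ring.
rewrite m2 in HD1.
have X1 : u * (D1 + (p.+1 + p.+1)%:R * H ^+ (p.+1 + p))
          <= B ^+ p ^+ 2 * (b * (2 * m * (G + 1) + tau)).
  rewrite m2; apply: (@le_trans _ _ (u * (B ^+ (p.+1 + p) * (2 * m * G + tau) + 2 * m * B ^+ (p.+1 + p)))).
    apply: ler_wpM2l => //; apply: lerD => //; apply: ler_wpM2l => //.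
    by rewrite mulr_ge0 // ?(le_trans _ m1).
  rewrite E /b; apply: eqleR; ring.
have key : 2 * m * (G + 1) * b <= (m * (4 * s + 3 * s ^+ 2)) ^+ 2.
  have k1 : 2 * (1 + 2 * s) ^+ 2 <= m * (4 + 3 * s) ^+ 2.
    apply: (@le_trans _ _ ((4 + 3 * s) ^+ 2)); last by rewrite ler_peMl // sqr_ge0.
    rewrite -subr_ge0.
    have -> : (4 + 3 * s) ^+ 2 - 2 * (1 + 2 * s) ^+ 2 = 14 + 16 * s + s ^+ 2 by ring.
    by rewrite !addr_ge0 ?mulr_ge0 ?sqr_ge0.
  have -> : 2 * m * (G + 1) * b = m * s ^+ 2 * (2 * (1 + 2 * s) ^+ 2) by rewrite -sb /G; ring.
  have -> : (m * (4 * s + 3 * s ^+ 2)) ^+ 2 = m * s ^+ 2 * (m * (4 + 3 * s) ^+ 2) by ring.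
  by apply: ler_wpM2l => //; rewrite mulr_ge0 // ?sqr_ge0 // (le_trans _ m1).
have m0 : 0 <= m by apply: le_trans m1.
have q0 : 0 <= 4 * s + 3 * s ^+ 2 by rewrite addr_ge0 // mulr_ge0 // sqr_ge0.
have X2 : Num.sqrt (u * (D1 + (p.+1 + p.+1)%:R * H ^+ (p.+1 + p)))
          <= B ^+ p * (m * (4 * s + 3 * s ^+ 2) + t).
  apply: sqrt_le_of; first by rewrite mulr_ge0 // addr_ge0 // mulr_ge0.
  apply: (le_trans X1); rewrite exprMn; apply: ler_wpM2l; first exact: sqr_ge0.
  have cross : 0 <= 2 * (m * (4 * s + 3 * s ^+ 2)) * t.
    by rewrite !mulr_ge0.
  have -> : (m * (4 * s + 3 * s ^+ 2) + t) ^+ 2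
     = (m * (4 * s + 3 * s ^+ 2)) ^+ 2 + 2 * (m * (4 * s + 3 * s ^+ 2)) * t + t ^+ 2 by ring.
  rewrite tt; move: key; set Q := (m * _) ^+ 2; lra.
apply: (le_trans HDk); apply: (le_trans (lerD X2 (lexx _))).
have E2 : u * p.+1%:R * B ^+ p.+1 = B ^+ p * (m * s ^+ 2) by rewrite sb /b /m exprS; ring.
apply: eqleR; rewrite E2 /G; ring.
Qed.

End Scalar.

Section Scalar2.
Variable R : realType.

Lemma scalar_main (H u : R) (L : nat) (D : nat -> R) :
  0 <= H -> 0 <= u ->
  (forall k, (k <= L)%N -> D k <= Num.sqrt (u * (D k.+1 + (2 ^ k.+1)%:R * H ^+ (2 ^ k.+1).-1))
                                  + u * (2 ^ k)%:R * (H + 1) ^+ (2 ^ k)) ->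
  D L.+1 <= H ^+ (2 ^ L.+1) ->
  H + 4 <= 2 ^+ (2 ^ L) ->
  D 0%N <= 2 * (L%:R + 1) * Num.sqrt (u * (H + 1)) + (L%:R + 1) * (2 * u) * (H + 1).
Proof.
move=> H0 u0 Hk HL H4.
set s := Num.sqrt (u * (H + 1)).
have B1 : 1 <= H + 1 by rewrite lerDr.
have s0 : 0 <= s by exact: sqrtr_ge0.
have ss : s ^+ 2 = u * (H + 1) by rewrite sqr_sqrtr // mulr_ge0 // (le_trans _ B1).
set B := H + 1.
set b := u * B.
set G := 4 * (s + s ^+ 2).
have b0 : 0 <= b by rewrite /b /B -ss sqr_ge0.
have HB : H <= B by rewrite /B lerDl.
have Bn : 0 <= B by apply: le_trans B1.
pose tau j := iter j (fun t => Num.sqrt (b * t)) H.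
have tau0 : forall j, 0 <= tau j by case=> [|j] //=; exact: sqrtr_ge0.
have G0 : 0 <= G by rewrite mulr_ge0 // addr_ge0 // sqr_ge0.
have claim : forall j, (j <= L.+1)%N ->
    D (L.+1 - j)%N <= B ^+ (2 ^ (L.+1 - j)).-1 * ((2 ^ (L.+1 - j))%:R * G + tau j).
  elim=> [|j IH] Hj.
    rewrite subn0.
    have N0 : (0 < 2 ^ L.+1)%N by rewrite expn_gt0.
    apply: (le_trans HL); rewrite -(prednK N0) exprS mulrC prednK //.
    apply: ler_pM; rewrite ?exprn_ge0 //.
      by apply: lerXn2r; rewrite ?nnegrE.
    by rewrite /tau /= lerDr mulr_ge0.
  have jL : (j <= L)%N by [].
  set k := (L - j)%N.
  have E1 : (L.+1 - j = k.+1)%N by rewrite /k subSn.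
  have E2 : (L.+1 - j.+1 = k)%N by rewrite subSS.
  have IH' := IH (ltnW Hj); rewrite E1 in IH'.
  rewrite E2.
  have Hk' := Hk k (leq_subr _ _).
  have P0 : (0 < 2 ^ k)%N by rewrite expn_gt0.
  set p := (2 ^ k).-1.
  have Ep : (2 ^ k = p.+1)%N by rewrite /p prednK.
  have Ep2 : (2 ^ k.+1 = p.+1 + p.+1)%N by rewrite expnS Ep mul2n addnn.
  have Ep3 : ((2 ^ k.+1).-1 = p.+1 + p)%N by rewrite Ep2 addSn /= addnC.
  rewrite Ep3 Ep2 in IH'; rewrite Ep3 Ep2 Ep in Hk'.
  rewrite Ep /=.
  have := @step R H u s H0 u0 s0 ss (D k.+1) (D k) (tau j) p (tau0 j) IH' Hk'.
  by [].
have C := claim L.+1 (leqnn _); rewrite subnn expn0 expr0 mul1r mulr1n mul1r in C.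
have Hpow : forall j, tau j ^+ (2 ^ j) = b ^+ (2 ^ j).-1 * H.
  elim=> [|j IH]; first by rewrite /= expr1 expr0 mul1r.
  have P0 : (0 < 2 ^ j)%N by rewrite expn_gt0.
  rewrite expnS exprM /= sqr_sqrtr ?mulr_ge0 // exprMn IH mulrA -exprD.
  congr (b ^+ _ * H); rewrite -(prednK P0) /=; lia.
set T := tau L.+1 in C.
set N := (2 ^ L.+1)%N.
have N0 : (0 < N)%N by rewrite expn_gt0.
have TN : T ^+ N = b ^+ N.-1 * H by exact: Hpow.
have L1 : (1 <= L)%N.
  case: L H4 {Hk HL claim C TN T N N0 Hpow tau tau0} => [|L] //= H4.
  by move: H4; rewrite expn0 expr1; lra.
have RHS : 2 * (L%:R + 1) * s + (L%:R + 1) * (2 * u) * (H + 1) = 2 * (L%:R + 1) * (s + s ^+ 2).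
  by rewrite ss; ring.
rewrite RHS; apply: (le_trans C).
have sp0 : 0 <= s + s ^+ 2 by rewrite addr_ge0 // sqr_ge0.
have [Hz|Hp] := eqVneq H 0.
  have T0 : T = 0.
    have : T ^+ N == 0 by rewrite TN Hz mulr0.
    by rewrite expf_eq0 N0 /= => /eqP.
  rewrite T0 addr0 /G; rewrite -subr_ge0.
  have -> : 2 * (L%:R + 1) * (s + s ^+ 2) - 4 * (s + s ^+ 2) = 2 * (L%:R - 1) * (s + s ^+ 2) by ring.
  rewrite mulr_ge0 // mulr_ge0 // subr_ge0 ler1n //.
have Hpos : 0 < H by rewrite lt_def Hp H0.
have L2 : (2 <= L)%N.
  case: L H4 L1 {Hk HL claim C TN T N N0 Hpow tau tau0 RHS} => [|[|L]] //= H4 _.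
  by move: H4; rewrite expn1 expr2; lra.
have TV : T <= 2 * (s + s ^+ 2).
  have V0 : 0 <= 2 * (s + s ^+ 2) by rewrite mulr_ge0.
  rewrite -(ler_pXn2r N0) ?nnegrE ?tau0 // TN.
  have HN : H <= 2 ^+ N.
    apply: (le_trans (y := H + 4)); first by lra.
    apply: (le_trans H4); apply: ler_weXn2l; first by lra.
    by rewrite leq_exp2l // ltnW.
  have [b1|b1] := lerP 1 b.
    apply: (@le_trans _ _ (b ^+ N * 2 ^+ N)).
      apply: ler_pM; rewrite ?exprn_ge0 //; first by apply: ler_weXn2l; rewrite // leq_pred.
    rewrite -exprMn; apply: lerXn2r; rewrite ?nnegrE ?mulr_ge0 //.
    rewrite mulrC /b /B -ss; by apply: ler_wpM2l => //; rewrite lerDr.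
  apply: (@le_trans _ _ (s ^+ N * 2 ^+ N)).
    have Eb : b ^+ (2 ^ L) = s ^+ N by rewrite /b /B -ss -exprM /N expnS mulnC.
    apply: ler_pM; rewrite ?exprn_ge0 //.
    rewrite -Eb; apply: ler_wiXn2l; [exact: b0 | exact: ltW |].
    by rewrite /N expnS mul2n -addnn -subn1 -addnBA ?expn_gt0 // leq_addr.
  rewrite -exprMn; apply: lerXn2r; rewrite ?nnegrE ?mulr_ge0 //.
  by rewrite mulrC ler_wpM2l // lerDl sqr_ge0.
apply: (@le_trans _ _ (G + 2 * (s + s ^+ 2))); first by rewrite lerD2l.
rewrite /G -subr_ge0.
have -> : 2 * (L%:R + 1) * (s + s ^+ 2) - (4 * (s + s ^+ 2) + 2 * (s + s ^+ 2))
  = 2 * (L%:R - 2) * (s + s ^+ 2) by ring.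
by rewrite mulr_ge0 // mulr_ge0 // subr_ge0 ler_nat.
Qed.

End Scalar2.

End ScWrap.

Section MkWrap.
Import numFieldNormedType.Exports.
Local Open Scope classical_set_scope.

Section Markov.
Variables (R : realType) (S : finType) (M : S -> S -> R).
Hypothesis Mnn : forall s s', 0 <= M s s'.
Hypothesis Msum : forall s, \sum_(s' : S) M s s' = 1.

Lemma mapply_lin (a b : R) (f g : S -> R) s :
  mapply M (fun u => a * f u + b * g u) s = a * mapply M f s + b * mapply M g s.
Proof.
rewrite /mapply !big_distrr -big_split /=; apply: eq_bigr => u _.
by rewrite mulrDr !mulrA ![_ * M s u]mulrC.
Qed.

Lemma mapply_ext (f g : S -> R) s : (forall u, f u = g u) -> mapply M f s = mapply M g s.
Proof. by move=> H; rewrite /mapply; apply: eq_bigr => u _; rewrite H. Qed.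

Lemma mapply_sub (f g : S -> R) s :
  mapply M (fun u => f u - g u) s = mapply M f s - mapply M g s.
Proof.
rewrite /mapply -sumrB; apply: eq_bigr => u _; by rewrite mulrBr.
Qed.

Lemma kerim0 (x y : S -> R) :
  (forall s, mapply M x s = x s) -> (forall s, x s = y s - mapply M y s) ->
  forall s, x s = 0.
Proof.
move=> Hx Hy.
have Hit : forall t s, iter t (mapply M) y s = y s - t%:R * x s.
  elim=> [|t IH] s /=; first by rewrite mul0r subr0.
  rewrite (mapply_ext (iter t (mapply M) y) (fun u => 1 * y u + (- t%:R) * x u)); last first.
    by move=> u; rewrite IH mul1r mulNr.
  have HMy : mapply M y s = y s - x s by rewrite Hy opprB addrC subrK.
  rewrite mapply_lin Hx HMy -natr1; ring.
set K := \sum_(u : S) `|y u|.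
have HK : forall u, `|y u| <= K.
  move=> u; rewrite /K (bigD1 u) //= lerDl; exact: sumr_ge0.
have Hb : forall t s, `|iter t (mapply M) y s| <= K.
  elim=> [|t IH] s /=; first exact: HK.
  rewrite /mapply; apply: (le_trans (ler_norm_sum _ _ _)).
  apply: (@le_trans _ _ (\sum_(u : S) M s u * K)).
    apply: ler_sum => u _; rewrite normrM ger0_norm //; exact: ler_wpM2l.
  by rewrite -big_distrl /= Msum mul1r.
move=> s; apply/eqP; apply/negPn/negP => Hne.
have Hpos : 0 < `|x s| by rewrite normr_gt0.
set t := (Num.truncn ((K + K) / `|x s|)).+1.
have H1 : (K + K) / `|x s| < t%:R by apply: truncnS_gt.
have H2 : `|t%:R * x s| <= K + K.
  have -> : t%:R * x s = y s - iter t (mapply M) y s.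
    by rewrite Hit opprB addrC subrK.
  apply: (le_trans (ler_normB _ _)); exact: lerD (HK s) (Hb t s).
move: H1; rewrite ltr_pdivrMr // -(ger0_norm (ler0n _ t)) -normrM.
by rewrite ltNge H2.
Qed.

Definition toV (z : S -> R) : 'rV[R]_#|S| := \row_i z (enum_val i).
Definition ofV (v : 'rV[R]_#|S|) : S -> R := fun s => v 0 (enum_rank s).
Definition Mt : 'M[R]_#|S| := \matrix_(i, j) M (enum_val j) (enum_val i).

Lemma ofVK z s : ofV (toV z) s = z s.
Proof. by rewrite /ofV /toV mxE enum_rankK. Qed.

Lemma sum_enum (F : S -> R) : \sum_(s : S) F s = \sum_(i < #|S|) F (enum_val i).
Proof.
by rewrite (reindex (@enum_val _ (pred_of_simpl predT))) //; exists enum_rank => i _;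
  [rewrite enum_valK | rewrite enum_rankK].
Qed.

Lemma ofV_mul v s : ofV (v *m Mt) s = mapply M (ofV v) s.
Proof.
rewrite /ofV /mapply mxE sum_enum; apply: eq_bigr => i _.
by rewrite mxE enum_rankK enum_valK mulrC.
Qed.

Lemma ofV_lin (a b : R) v w s : ofV (a *: v + b *: w) s = a * ofV v s + b * ofV w s.
Proof. by rewrite /ofV !mxE. Qed.

Lemma ofVD v w s : ofV (v + w) s = ofV v s + ofV w s.
Proof. by rewrite /ofV !mxE. Qed.
Lemma ofVB v w s : ofV (v - w) s = ofV v s - ofV w s.
Proof. by rewrite /ofV !mxE. Qed.

Lemma dec_exists (z : S -> R) : exists x y : S -> R,
  (forall s, mapply M x s = x s) /\ (forall s, z s = x s + y s - mapply M y s).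
Proof.
pose A : 'M[R]_#|S| := 1%:M - Mt.
pose K := kermx A.
have Hcap : (K :&: A)%MS = 0.
  apply/eqP/rowV0P => v; rewrite sub_capmx => /andP [/sub_kermxP Hk /submxP [y Hy]].
  have Hv : v = v *m Mt.
    by apply/eqP; rewrite -subr_eq0 -{1}(mulmx1 v) -mulmxBr; apply/eqP.
  have Hy' : v = y - y *m Mt by rewrite Hy mulmxBr mulmx1.
  have H0 := @kerim0 (ofV v) (ofV y).
  have H0' : forall s, ofV v s = 0.
    apply: H0 => s; first by rewrite -ofV_mul -Hv.
    by rewrite -ofV_mul {1}Hy' /ofV !mxE.
  apply/matrixP => i j; rewrite !mxE (ord1 i).
  by have := H0' (enum_val j); rewrite /ofV enum_valK.
have Hrk : \rank (K + A)%MS = #|S|.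
  rewrite mxrank_disjoint_sum // mxrank_ker subnK //; exact: rank_leq_col.
have Hfull : row_full (K + A)%MS by rewrite /row_full Hrk.
have /sub_addsmxP [[u1 u2] /= Hw] := submx_full (toV z) Hfull.
exists (ofV (u1 *m K)), (ofV u2); split.
  move=> s; rewrite -ofV_mul; congr (ofV _ s).
  apply/esym/eqP; rewrite -subr_eq0 -{1}(mulmx1 (u1 *m K)) -mulmxBr -mulmxA mulmx_ker.
  by rewrite mulmx0.
move=> s; rewrite -ofV_mul -(ofVK z s) Hw ofVD /A mulmxBr mulmx1 ofVB.
by rewrite addrA.
Qed.

Lemma iter_bnd y t s : `|iter t (mapply M) y s| <= \sum_(u : S) `|y u|.
Proof.
set K := \sum_(u : S) `|y u|.
have HK : forall u, `|y u| <= K.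
  move=> u; rewrite /K (bigD1 u) //= lerDl; exact: sumr_ge0.
elim: t s => [|t IH] s /=; first exact: HK.
rewrite /mapply; apply: (le_trans (ler_norm_sum _ _ _)).
apply: (@le_trans _ _ (\sum_(u : S) M s u * K)).
  apply: ler_sum => u _; rewrite normrM ger0_norm //; exact: ler_wpM2l.
by rewrite -big_distrl /= Msum mul1r.
Qed.

Lemma mpow_iter t z s : mapply (mpow M t) z s = iter t (mapply M) z s.
Proof.
elim: t z s => [|t IH] z s.
  rewrite /= /mapply (bigD1 s) //= eqxx mul1r big1 ?addr0 // => u /negbTE.
  by rewrite eq_sym => ->; rewrite mul0r.
rewrite iterSr -IH /mapply /=.
under eq_bigr do rewrite big_distrl /=.
rewrite exchange_big /=; apply: eq_bigr => u _.
by rewrite big_distrr /=; apply: eq_bigr => v _; rewrite mulrA.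
Qed.

Lemma cesaro_cvg (w : nat -> R) a C :
  (forall T, `|\sum_(t < T) w t - T%:R * a| <= C) -> Defs.cesaro w @ \oo --> a.
Proof.
move=> H; apply/cvgrPdist_le => e e0.
have C0 : 0 <= C by have := H 0%N; rewrite big_ord0 mul0r subr0 normr0.
apply: filterS (nbhs_infty_ge (Num.truncn (C / e)).+1) => T HT.
have HT0 : (0 < T)%N by apply: leq_trans HT.
have HTR : 0 < T%:R :> R by rewrite ltr0n.
have HCe : C / e < T%:R.
  apply: (lt_le_trans (truncnS_gt _)); by rewrite ler_nat.
rewrite /Defs.cesaro.
have -> : a - T%:R^-1 * \sum_(t < T) w t = - (T%:R^-1 * (\sum_(t < T) w t - T%:R * a)).
  by rewrite mulrBr mulrA mulVf ?mul1r ?opprB // gt_eqF.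
rewrite normrN normrM ger0_norm ?invr_ge0 ?ltW //.
apply: (@le_lt_trans _ _ (T%:R^-1 * C)); first by apply: ler_wpM2l; [rewrite invr_ge0 ltW | exact: H].
rewrite mulrC ltr_pdivrMr //; move: HCe; rewrite ltr_pdivrMr //.
by rewrite mulrC.
Qed.

Definition cseq (z : S -> R) s := Defs.cesaro (fun t => iter t (mapply M) z s).

Section Dec.
Variables (z xf y : S -> R).
Hypothesis Hx : forall s, mapply M xf s = xf s.
Hypothesis Hz : forall s, z s = xf s + y s - mapply M y s.

Lemma iter_dec t s :
  iter t (mapply M) z s = xf s + iter t (mapply M) y s - iter t.+1 (mapply M) y s.
Proof.
elim: t s => [|t IH] s /=; first exact: Hz.
rewrite (mapply_ext _ (fun u => 1 * xf u + 1 * (iter t (mapply M) y u - iter t.+1 (mapply M) y u))); last first.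
  by move=> u; rewrite IH !mul1r addrA.
by rewrite mapply_lin !mul1r Hx mapply_sub addrA.
Qed.

Lemma sum_iter_dec T s :
  \sum_(t < T) iter t (mapply M) z s = T%:R * xf s + y s - iter T (mapply M) y s.
Proof.
elim: T => [|T IH]; first by rewrite big_ord0 mul0r add0r subrr.
rewrite big_ord_recr /= IH iter_dec -natr1 /=; ring.
Qed.

Lemma cesaro_dec s : cseq z s @ \oo --> xf s.
Proof.
apply: (@cesaro_cvg _ _ (\sum_(u : S) `|y u| + \sum_(u : S) `|y u|)) => T.
rewrite sum_iter_dec.
have -> : T%:R * xf s + y s - iter T (mapply M) y s - T%:R * xf s
          = y s - iter T (mapply M) y s by ring.
apply: (le_trans (ler_normB _ _)); apply: lerD; last exact: iter_bnd.
exact: (iter_bnd _ 0).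
Qed.
End Dec.

Definition Pi (z : S -> R) s := limn (Defs.cesaro (fun t => iter t (mapply M) z s)).

Lemma Pi_dec z xf y : (forall s, mapply M xf s = xf s) ->
  (forall s, z s = xf s + y s - mapply M y s) -> forall s, Pi z s = xf s.
Proof. by move=> Hx Hz s; apply: cvg_lim => //; exact: cesaro_dec. Qed.

Lemma Pi_cvg z s : cseq z s @ \oo --> Pi z s.
Proof.
have [xf [y [Hx Hz]]] := dec_exists z.
rewrite (Pi_dec _ _ _ Hx Hz s); exact: cesaro_dec.
Qed.

Lemma mpow_ge0 t s s' : 0 <= mpow M t s s'.
Proof.
elim: t s s' => [|t IH] s s' /=; first exact: ler0n.
by apply: sumr_ge0 => u _; apply: mulr_ge0.
Qed.

Lemma mpow_ind t s s' : mpow M t s s' = iter t (mapply M) (fun u => (u == s')%:R) s.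
Proof.
rewrite -mpow_iter /mapply (bigD1 s') //= eqxx mulr1 big1 ?addr0 // => u /negbTE ->.
by rewrite mulr0.
Qed.

Lemma Pinf_Pi s s' : Pinf M s s' = Pi (fun u => (u == s')%:R) s.
Proof.
rewrite /Pinf /clim /Pi; congr (limn (Defs.cesaro _)); apply: funext => t.
exact: mpow_ind.
Qed.

Lemma Pinf_ge0 s s' : 0 <= Pinf M s s'.
Proof.
rewrite /Pinf /clim.
have -> : (fun t => mpow M t s s') = (fun t => iter t (mapply M) (fun u => (u == s')%:R) s).
  by apply: funext => t; exact: mpow_ind.
apply: limr_ge; first exact: cvgP (Pi_cvg _ s).
apply: nearW => T; rewrite /Defs.cesaro; apply: mulr_ge0; first by rewrite invr_ge0 ler0n.
by apply: sumr_ge0 => t _; rewrite -mpow_ind mpow_ge0.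
Qed.


Lemma mapply_sum (g : S -> S -> R) (c : S -> R) s :
  mapply M (fun u => \sum_(s' : S) c s' * g s' u) s = \sum_(s' : S) c s' * mapply M (g s') s.
Proof.
rewrite /mapply; under eq_bigr do rewrite big_distrr /=.
rewrite exchange_big /=; apply: eq_bigr => s' _; rewrite big_distrr /=.
by apply: eq_bigr => u _; rewrite mulrCA.
Qed.

Lemma sum_ind (z : S -> R) u : z u = \sum_(s' : S) z s' * (u == s')%:R.
Proof.
rewrite (bigD1 u) //= eqxx mulr1 big1 ?addr0 // => v /negbTE.
by rewrite eq_sym => ->; rewrite mulr0.
Qed.

Lemma mapply_Pinf z s : mapply (Pinf M) z s = Pi z s.
Proof.
have H : forall s' : S, exists p : ((S -> R) * (S -> R))%type,
  and (forall u, mapply M p.1 u = p.1 u)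
  (forall u, ((u == s')%:R : R) = p.1 u + p.2 u - mapply M p.2 u).
  move=> s'; have [x [y H]] := dec_exists (fun u => (u == s')%:R); by exists (x, y).
have [f Hf] := choice H.
pose X u := \sum_(s' : S) z s' * (f s').1 u.
pose Y u := \sum_(s' : S) z s' * (f s').2 u.
have HX : forall u, mapply M X u = X u.
  move=> u; rewrite /X mapply_sum; apply: eq_bigr => s' _; by rewrite (proj1 (Hf s')).
have HZ : forall u, z u = X u + Y u - mapply M Y u.
  move=> u; rewrite /X /Y mapply_sum -big_split -sumrB /= (sum_ind z u).
  apply: eq_bigr => s' _; rewrite (proj2 (Hf s') u); ring.
rewrite (Pi_dec _ _ _ HX HZ s) /X /mapply; apply: eq_bigr => s' _.
rewrite Pinf_Pi (Pi_dec _ _ _ (proj1 (Hf s')) (proj2 (Hf s')) s); exact: mulrC.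
Qed.


Lemma poisson z : forall s,
  z s = mapply (Pinf M) z s + clim (fun T => \sum_(t < T) (mapply (mpow M t) z s - mapply (Pinf M) z s))
        - mapply M (fun u => clim (fun T => \sum_(t < T) (mapply (mpow M t) z u - mapply (Pinf M) z u))) s.
Proof.
have EE : forall u, mapply (Pinf M) z u = Pi z u by move=> u; exact: mapply_Pinf.
have [x [y [Hx Hz]]] := dec_exists z.
have [x' [y' [Hx' Hy]]] := dec_exists y.
have Hh : forall u, clim (fun T => \sum_(t < T) (mapply (mpow M t) z u - mapply (Pinf M) z u)) = y u - x' u.
  move=> u; rewrite EE /clim; apply: cvg_lim => //.
  apply: (@cesaro_cvg _ _ (\sum_(v : S) `|y' v| + \sum_(v : S) `|y' v|)) => T.
  have E : forall T', \sum_(t < T') (mapply (mpow M t) z u - Pi z u) = y u - iter T' (mapply M) y u.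
    move=> T'; rewrite sumrB; under eq_bigr do rewrite mpow_iter.
    rewrite (sum_iter_dec _ _ _ Hx Hz) sumr_const card_ord (Pi_dec _ _ _ Hx Hz u) -mulr_natl; ring.
  under eq_bigr do rewrite E.
  rewrite sumrB sumr_const card_ord (sum_iter_dec _ _ _ Hx' Hy) -[y u *+ T]mulr_natl.
  have -> : T%:R * y u - (T%:R * x' u + y' u - iter T (mapply M) y' u) - T%:R * (y u - x' u)
           = - (y' u - iter T (mapply M) y' u) by ring.
  rewrite normrN; apply: (le_trans (ler_normB _ _)); apply: lerD; last exact: iter_bnd.
  exact: (iter_bnd _ 0).
move=> s; rewrite (mapply_ext _ _ s Hh) Hh EE mapply_sub Hx' (Pi_dec _ _ _ Hx Hz s).
have HMy : mapply M y s = x s + y s - z s by rewrite Hz; ring.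
rewrite HMy; ring.
Qed.


Lemma Pi_M z s : Pi (mapply M z) s = Pi z s.
Proof.
have [x [y [Hx Hz]]] := dec_exists z.
rewrite (Pi_dec _ _ _ Hx Hz s).
apply: (Pi_dec _ _ (mapply M y) Hx) => u.
rewrite (mapply_ext _ (fun v => 1 * x v + 1 * (y v - mapply M y v)) u); last first.
  by move=> v; rewrite Hz !mul1r addrA.
by rewrite mapply_lin !mul1r Hx mapply_sub addrA.
Qed.

Lemma Pinf_M z s : \sum_u Pinf M s u * mapply M z u = \sum_u Pinf M s u * z u.
Proof.
have := mapply_Pinf (mapply M z) s; rewrite /mapply => ->.
by rewrite Pi_M -mapply_Pinf.
Qed.

Lemma Pinf_sum1 s : \sum_u Pinf M s u = 1.
Proof.
have := mapply_Pinf (fun _ => 1) s; rewrite /mapply.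
under eq_bigr do rewrite mulr1.
move=> ->.
apply: (Pi_dec _ _ (fun _ => 0)) => u.
  by rewrite /mapply -big_distrl /= Msum mul1r.
by rewrite /mapply big1 ?addr0 ?subr0 // => v _; rewrite mulr0.
Qed.

End Markov.

End MkWrap.

Section GenWrap.

Section Gen.
Variables (R : realType) (S : finType).

Lemma aux1 (a b : R) : a <= 1 -> 0 <= b -> a - b <= 1. Proof. lra. Qed.

Lemma aux2 (x : R) : 0 <= x -> 2 < x + 4. Proof. lra. Qed.
Lemma aux3 (x : R) : 0 <= x -> 0 < x + 4. Proof. lra. Qed.

Lemma aux4 (a b K : R) : 0 <= a <= K -> 0 <= b <= K -> `|a - b| <= K.
Proof. move=> /andP [? ?] /andP [? ?]; rewrite ler_norml; apply/andP; split; lra. Qed.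

Lemma powdiff (a q K : R) N : 0 <= a <= K -> 0 <= q <= K -> a - q <= 1 ->
  a ^+ N - q ^+ N <= N%:R * K ^+ N.-1.
Proof.
move=> /andP [a0 aK] /andP [q0 qK] aq.
rewrite subrXX.
have S0 : 0 <= \sum_(i < N) a ^+ (N.-1 - i) * q ^+ i.
  by apply: sumr_ge0 => i _; rewrite mulr_ge0 // exprn_ge0.
apply: (@le_trans _ _ (1 * \sum_(i < N) a ^+ (N.-1 - i) * q ^+ i)).
  exact: ler_wpM2r.
rewrite mul1r; apply: (@le_trans _ _ (\sum_(i < N) K ^+ N.-1)).
  apply: ler_sum => i _.
  have iN : (i <= N.-1)%N.
    have Ni : (0 < N)%N := leq_ltn_trans (leq0n i) (ltn_ord i).
    by rewrite -ltnS prednK.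
  rewrite -[X in _ <= K ^+ X](subnK iN) exprD; apply: ler_pM; rewrite ?exprn_ge0 //.
    by apply: lerXn2r; rewrite ?nnegrE // (le_trans a0 aK).
  by apply: lerXn2r; rewrite ?nnegrE // (le_trans a0 aK).
by rewrite sumr_const card_ord mulr_natl.
Qed.

Lemma var_eq (w y : S -> R) : \sum_s w s = 1 ->
  \sum_s w s * (y s - \sum_u w u * y u) ^+ 2
  = \sum_s w s * y s ^+ 2 - (\sum_u w u * y u) ^+ 2.
Proof.
move=> Hw; set m := \sum_u w u * y u.
have -> : \sum_s w s * (y s - m) ^+ 2
   = \sum_s w s * y s ^+ 2 - (m *+ 2) * \sum_s w s * y s + m ^+ 2 * \sum_s w s.
  rewrite !big_distrr /= -sumrB -big_split /=; apply: eq_bigr => s _; ring.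
rewrite Hw -/m; ring.
Qed.

Lemma cs_ineq (w y : S -> R) : (forall s, 0 <= w s) -> \sum_s w s = 1 ->
  (\sum_s w s * y s) ^+ 2 <= \sum_s w s * y s ^+ 2.
Proof.
move=> H0 Hw; rewrite -subr_ge0 -var_eq //.
by apply: sumr_ge0 => s _; rewrite mulr_ge0 // sqr_ge0.
Qed.

Lemma sqrt_jensen (w v : S -> R) : (forall s, 0 <= w s) -> \sum_s w s = 1 ->
  (forall s, 0 <= v s) ->
  \sum_s w s * Num.sqrt (v s) <= Num.sqrt (\sum_s w s * v s).
Proof.
move=> H0 Hw Hv.
have S0 : 0 <= \sum_s w s * Num.sqrt (v s).
  by apply: sumr_ge0 => s _; rewrite mulr_ge0 // sqrtr_ge0.
rewrite -(ger0_norm S0) -sqrtr_sqr ler_sqrt; last first.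
  by apply: sumr_ge0 => s _; rewrite mulr_ge0.
apply: (le_trans (cs_ineq w (fun s => Num.sqrt (v s)) H0 Hw)); apply: ler_sum => s _.
by rewrite sqr_sqrtr.
Qed.

Lemma mapply_bnd (M : S -> S -> R) (x : S -> R) K s :
  (forall s s', 0 <= M s s') -> (forall s, \sum_s' M s s' = 1) ->
  (forall u, 0 <= x u <= K) -> 0 <= mapply M x s <= K.
Proof.
move=> Mnn Msum Hx; apply/andP; split.
  by apply: sumr_ge0 => u _; rewrite mulr_ge0 //; case/andP: (Hx u).
apply: (@le_trans _ _ (\sum_u M s u * K)).
  by apply: ler_sum => u _; apply: ler_wpM2l => //; case/andP: (Hx u).
by rewrite -big_distrl /= Msum mul1r.
Qed.

Lemma pow_jensen (M : S -> S -> R) (x : S -> R) k s :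
  (forall s s', 0 <= M s s') -> (forall s, \sum_s' M s s' = 1) ->
  (forall u, 0 <= x u) ->
  mapply M x s ^+ (2 ^ k) <= mapply M (epow x (2 ^ k)) s.
Proof.
move=> Mnn Msum Hx.
have Mx0 : forall y : S -> R, (forall u, 0 <= y u) -> 0 <= mapply M y s.
  by move=> y Hy; apply: sumr_ge0 => u _; rewrite mulr_ge0.
elim: k => [|k IH].
  rewrite expn0 expr1; apply: eqleR; apply: mapply_ext => u.
  by rewrite /epow expr1.
rewrite expnSr exprM.
apply: (@le_trans _ _ (mapply M (epow x (2 ^ k)) s ^+ 2)).
  apply: lerXn2r => //; rewrite ?nnegrE ?exprn_ge0 ?Mx0 //.
  by move=> u; rewrite /epow exprn_ge0.
apply: (le_trans (cs_ineq (M s) (epow x (2 ^ k)) (Mnn s) (Msum s))); apply: eqleR; apply: eq_bigr => u _.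
by rewrite /epow -exprM.
Qed.

End Gen.


End GenWrap.

Theorem mainTheorem17 (R : realType) (S A : finType)
  (P Phat : S -> A -> S -> R) (r : S -> A -> R) (pi : S -> A -> R)
  (n : nat) (alpha : R) :
  is_kernel P -> is_kernel Phat ->
  (forall s a, 0 <= r s a <= 1) ->
  (0 < n)%N ->
  is_policy pi ->
  (exists c : R, forall s, gain P pi r s = c) ->
  0 < alpha ->
  let h := bias P pi r in
  let hbar := fun s => h s - minS h in
  let l : int := Num.ceil (log2 (log2 (supn hbar + 4))) in
  (forall k : nat, (k%:Z <= l)%R -> forall s : S,
     `| (mapply (Ppi Phat pi) (epow hbar (2 ^ k))
         - mapply (Ppi P pi) (epow hbar (2 ^ k))) s |
     <= Num.sqrt (alpha * Var (Ppi P pi) (epow hbar (2 ^ k)) s / n%:R)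
        + alpha * (2 ^ k)%:R / n%:R * (supn hbar + 1) ^+ (2 ^ k)) ->
  supn (fun s => gain Phat pi r s - gain P pi r s)
  <= 2 * (l%:~R + 1) * Num.sqrt (alpha * (supn hbar + 1) / n%:R)
     + (l%:~R + 1) * (2 * alpha / n%:R) * (supn hbar + 1).
Proof.
move=> [Pnn Psum] [Phnn Phsum] Hr Hn [pnn psum] [c Hc] Ha h hbar l Hyp.
have stoch : forall Q : S -> A -> S -> R, (forall s a s', 0 <= Q s a s') ->
    (forall s a, \sum_s' Q s a s' = 1) ->
    (forall s s', 0 <= Ppi Q pi s s') /\ (forall s, \sum_s' Ppi Q pi s s' = 1).
  move=> Q Qnn Qsum; split.
    by move=> s s'; apply: sumr_ge0 => a _; rewrite mulr_ge0.
  move=> s; rewrite /Ppi exchange_big /= -(psum s); apply: eq_bigr => a _.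
  by rewrite -big_distrr /= Qsum mulr1.
have [Mpnn Mpsum] := stoch P Pnn Psum.
have [Mhnn Mhsum] := stoch Phat Phnn Phsum.
set Mp := Ppi P pi in Mpnn Mpsum Hyp *.
set Mh := Ppi Phat pi in Mhnn Mhsum Hyp *.
set rr := rpi pi r.
have rr01 : forall s, 0 <= rr s <= 1.
  move=> s; apply/andP; split.
    by apply: sumr_ge0 => a _; rewrite mulr_ge0 //; case/andP: (Hr s a).
  rewrite -(psum s); apply: ler_sum => a _; rewrite -[X in _ <= X]mulr1.
  by apply: ler_wpM2l => //; case/andP: (Hr s a).
have Pois : forall s, rr s = c + h s - mapply Mp h s.
  move=> s; rewrite -(Hc s); exact (@poisson _ _ Mp Mpnn Mpsum rr s).
have hb0 : forall s, 0 <= hbar s.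
  by move=> s; rewrite /hbar subr_ge0 /minS; exact: bigmin_le.
have hbH : forall s, hbar s <= supn hbar.
  move=> s; apply: (le_trans (ler_norm _)); exact: (le_bigmax _ (fun s => `|hbar s|) s).
have Hs0 : 0 <= supn hbar by exact: bigmax_ge_id.
have MpC : forall (z : S -> R) a s, mapply Mp (fun u => z u - a) s = mapply Mp z s - a.
  move=> z a s; rewrite /mapply (eq_bigr (fun u => Mp s u * z u - Mp s u * a)); last first.
    by move=> u _; rewrite mulrBr.
  by rewrite sumrB -big_distrl /= Mpsum mul1r.
have PoisB : forall s, rr s = c + hbar s - mapply Mp hbar s.
  move=> s; rewrite /hbar MpC Pois.
  move: (h s) (minS h) (mapply Mp h s) => a b d; ring.
have gainE : forall s, gain P pi r s = \sum_u Pinf Mp s u * rr u by [].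
have c01 : forall s : S, 0 <= c <= 1.
  move=> s; rewrite -(Hc s) gainE; apply/andP; split.
    by apply: sumr_ge0 => u _; rewrite mulr_ge0 ?Pinf_ge0 //; case/andP: (rr01 u).
  rewrite -(@Pinf_sum1 _ _ Mp Mpnn Mpsum s); apply: ler_sum => u _.
  rewrite -[X in _ <= X]mulr1; apply: ler_wpM2l; first exact: Pinf_ge0.
  by case/andP: (rr01 u).
have hdiff : forall s, hbar s - mapply Mp hbar s <= 1.
  move=> s; have := PoisB s; have := rr01 s; have := c01 s.
  move=> /andP [H H0] /andP [H1 H2] E.
  have -> : hbar s - mapply Mp hbar s = rr s - c.
    by rewrite E; move: (hbar s) (mapply Mp hbar s) => a b; ring.
  exact: aux1.
have Mphb : forall s, 0 <= mapply Mp hbar s <= supn hbar.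
  by move=> s; apply: mapply_bnd => // u; rewrite hb0 hbH.
have l2pos : 1 < log2 (supn hbar + 4).
  have ln2 : 0 < ln (2 : R) by rewrite ln_gt0 // ltr1n.
  rewrite /log2 ltr_pdivlMr // mul1r.
  by rewrite ltr_ln ?posrE ?ltr0n ?aux2 ?aux3.
have lpos : 0 < log2 (log2 (supn hbar + 4)).
  by rewrite /log2 divr_gt0 // ln_gt0 // ltr1n.
have [L HL] : exists L : nat, l = L%:Z.
  have : 0 < l by rewrite -(ltr0z R); apply: lt_le_trans lpos (ceil_ge _).
  by move=> l0; exists `|l|%N; rewrite gez0_abs // ltW.
have lR : (l%:~R : R) = L%:R by rewrite HL.
have ln2 : 0 < ln (2 : R) by rewrite ln_gt0 // ltr1n.
have c1 : log2 (log2 (supn hbar + 4)) <= L%:R by rewrite -lR; exact: ceil_ge.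
have y0 : 0 < log2 (supn hbar + 4) by apply: lt_trans l2pos.
have c2 : log2 (supn hbar + 4) <= 2 ^+ L.
  have p2L : (0 : R) < 2 ^+ L by rewrite exprn_gt0.
  rewrite -ler_ln ?posrE // lnXn // -[ln 2 *+ L]mulr_natr mulrC -ler_pdivrMr //.
have H4 : supn hbar + 4 <= 2 ^+ (2 ^ L).
  move: c2; rewrite /log2 ler_pdivrMr // => c2.
  have p2L : (0 : R) < 2 ^+ (2 ^ L) by rewrite exprn_gt0.
  rewrite -ler_ln ?posrE ?aux3 // lnXn // -[ln 2 *+ _]mulr_natr mulrC natrX.
  exact: c2.
set u := alpha / n%:R.
have u0 : 0 <= u by rewrite /u divr_ge0 ?ler0n // ltW.
have RE : 2 * (l%:~R + 1) * Num.sqrt (alpha * (supn hbar + 1) / n%:R)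
     + (l%:~R + 1) * (2 * alpha / n%:R) * (supn hbar + 1)
   = 2 * (L%:R + 1) * Num.sqrt (u * (supn hbar + 1)) + (L%:R + 1) * (2 * u) * (supn hbar + 1).
  by rewrite lR [alpha * _ / _]mulrAC -[2 * alpha / _]mulrA.
rewrite RE /supn; apply: bigmax_le => [|s0 _].
  have Lp : 0 <= L%:R + 1 :> R by rewrite addr_ge0 ?ler0n.
  have B0 : 0 <= supn hbar + 1 by rewrite addr_ge0.
  apply: addr_ge0.
    by apply: mulr_ge0; [apply: mulr_ge0 | exact: sqrtr_ge0].
  by apply: mulr_ge0 => //; apply: mulr_ge0 => //; apply: mulr_ge0.
pose mu u := Pinf Mh s0 u.
have mu0 : forall u, 0 <= mu u by move=> v; exact: Pinf_ge0.
have mu1 : \sum_v mu v = 1 by exact: (@Pinf_sum1 _ _ Mh Mhnn Mhsum s0).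
have muM : forall z : S -> R, \sum_v mu v * mapply Mh z v = \sum_v mu v * z v.
  by move=> z; exact: (@Pinf_M _ _ Mh Mhnn Mhsum z s0).
pose D k := \sum_v mu v * `|mapply Mh (epow hbar (2 ^ k)) v - mapply Mp (epow hbar (2 ^ k)) v|.
have E0 : gain Phat pi r s0 - gain P pi r s0 = \sum_v mu v * (mapply Mh hbar v - mapply Mp hbar v).
  rewrite Hc; change (\sum_v mu v * rr v - c = \sum_v mu v * (mapply Mh hbar v - mapply Mp hbar v)).
  under eq_bigr do rewrite PoisB.
  have split1 : forall v, mu v * (c + hbar v - mapply Mp hbar v)
      = mu v * c + (mu v * hbar v - mu v * mapply Mp hbar v).
    by move=> v; move: (mu v) (hbar v) (mapply Mp hbar v) => a b d; ring.
  under eq_bigr do rewrite split1.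
  rewrite big_split /= -big_distrl /= mu1 mul1r sumrB.
  under [in RHS]eq_bigr do rewrite mulrBr.
  by rewrite sumrB muM addrC addrK.
have HD0 : `|gain Phat pi r s0 - gain P pi r s0| <= D 0%N.
  rewrite E0; apply: (le_trans (ler_norm_sum _ _ _)); apply: ler_sum => v _.
  rewrite normrM ger0_norm // expn0.
apply: (le_trans HD0).
apply: (@scalar_main R (supn hbar) u L D Hs0 u0 _ _ H4); last first.
  set N := (2 ^ L.+1)%N.
  have xb : forall v, 0 <= epow hbar N v <= supn hbar ^+ N.
    move=> v; rewrite /epow exprn_ge0 //=; apply: lerXn2r; rewrite ?nnegrE //.
  apply: (@le_trans _ _ (\sum_v mu v * supn hbar ^+ N)).
    apply: ler_sum => v _; apply: ler_wpM2l => //; apply: aux4; exact: mapply_bnd.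
  by rewrite -big_distrl /= mu1 mul1r.
move=> k Hk.
set m := (2 ^ k)%N.
set N := (2 ^ k.+1)%N.
set xk := epow hbar m.
set xk1 := epow hbar N.
have NE : N = (m * 2)%N by rewrite /N /m expnSr.
have Hy : forall v, `|mapply Mh xk v - mapply Mp xk v|
     <= Num.sqrt (u * Var Mp xk v) + u * m%:R * (supn hbar + 1) ^+ m.
  move=> v; have Hk' : (k%:Z <= l)%R by rewrite HL lez_nat.
  have := Hyp k Hk' v.
  by rewrite [alpha * Var _ _ _ / _]mulrAC [alpha * _%:R / _]mulrAC.
have Vnn : forall v, 0 <= u * Var Mp xk v.
  by move=> v; rewrite mulr_ge0 // sumr_ge0 // => w _; rewrite mulr_ge0 // sqr_ge0.
have VE : forall v, Var Mp xk v = mapply Mp xk1 v - (mapply Mp xk v) ^+ 2.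
  move=> v; rewrite /Var var_eq //; congr (_ - _); apply: eq_bigr => w _.
  by rewrite /xk /xk1 /epow -exprM NE.
have PB : forall v, xk1 v - (mapply Mp xk v) ^+ 2 <= N%:R * supn hbar ^+ N.-1.
  move=> v.
  have J := @pow_jensen R S Mp hbar k v Mpnn Mpsum hb0.
  have /andP [q0 qH] := Mphb v.
  apply: (@le_trans _ _ (hbar v ^+ N - mapply Mp hbar v ^+ N)).
    apply: lerB => //.
    rewrite NE exprM; apply: lerXn2r; rewrite ?nnegrE ?exprn_ge0 //.
    exact: (le_trans (exprn_ge0 _ q0) J).
  apply: powdiff; rewrite ?hb0 ?hbH ?q0 ?qH //; exact: hdiff.
have SV : \sum_v mu v * Var Mp xk v <= D k.+1 + N%:R * supn hbar ^+ N.-1.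
  have split2 : forall v, mu v * Var Mp xk v
     = mu v * (mapply Mp xk1 v - mapply Mh xk1 v) + mu v * (xk1 v - (mapply Mp xk v) ^+ 2)
       + (mu v * mapply Mh xk1 v - mu v * xk1 v).
    move=> v; rewrite VE.
    by move: (mu v) (mapply Mp xk1 v) (mapply Mh xk1 v) (xk1 v) (mapply Mp xk v) => a b d e f; ring.
  under eq_bigr do rewrite split2.
  rewrite big_split /= big_split /= sumrB muM subrr addr0.
  apply: lerD.
    apply: ler_sum => v _; apply: ler_wpM2l => //.
    by rewrite distrC; exact: ler_norm.
  apply: (@le_trans _ _ (\sum_v mu v * (N%:R * supn hbar ^+ N.-1))).
    by apply: ler_sum => v _; apply: ler_wpM2l.
  by rewrite -big_distrl /= mu1 mul1r.
apply: (@le_trans _ _ (\sum_v mu v * (Num.sqrt (u * Var Mp xk v) + u * m%:R * (supn hbar + 1) ^+ m))).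
  by apply: ler_sum => v _; apply: ler_wpM2l.
under eq_bigr do rewrite mulrDr.
rewrite big_split /= -[X in _ + X]big_distrl /= mu1 mul1r lerD2r.
apply: (le_trans (@sqrt_jensen R S mu (fun v => u * Var Mp xk v) mu0 mu1 Vnn)).
rewrite ler_sqrt; last by rewrite mulr_ge0 // addr_ge0 ?mulr_ge0 ?ler0n ?exprn_ge0 //;
  rewrite /D sumr_ge0 // => v _; rewrite mulr_ge0.
under eq_bigr do rewrite mulrCA.
by rewrite -big_distrr /=; apply: ler_wpM2l.
Qed.
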